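(* Let $k\ge 2$ and let $\overline{x}\in\Sigma_k^*$ be a fixed point of $\mathcal P_k$. Let $b_1>b_2>\dots>b_r$ be the letters occurring in $\overline{x}$, and for $1\le j\le r$ let $n_j=\lfloor \log_k |\overline{x}|_{b_j}\rfloor$, so that $n_j+1$ is the number of base-$k$ digits of $|\overline{x}|_{b_j}$ (equivalently, $\overline{x}=A_1b_1A_2b_2\cdots A_rb_r$ where $A_j=[|\overline x|_{b_j}]_k$ is a word of length $n_j+1$ whose first letter is nonzero). Then \[\sum_{j=1}^{r} n_j\;\ge\;\sum_{j=1}^{r}k^{n_j}-2r.\]
   Context: Fix an integer $k\ge 2$ and the alphabet $\Sigma_k=\{0,1,\dots,k-1\}$. A word is a finite nonempty string of letters of $\Sigma_k$ (leading zeros allowed); $\Sigma_k^*$ denotes the set of words. For a word $x$, $|x|$ denotes its length and $|x|_i$ the number of occurrences of the letter $i$ in $x$. For a positive integer $c$, $[c]_k$ denotes its standard base-$k$ representation without leading zeros, viewed as a word over $\Sigma_k$; it has $\lfloor\log_k c\rfloor+1$ letters. The map $\mathcal P_k:\Sigma_k^*\to\Sigma_k^*$ is defined as follows: if $b_1>b_2>\dots>b_r$ are exactly the letters occurring in $x$ (i.e. those with $|x|_{b_j}\neq 0$), then $\mathcal P_k(x)=[|x|_{b_1}]_k\,b_1\,[|x|_{b_2}]_k\,b_2\cdots[|x|_{b_r}]_k\,b_r$ (concatenation). A fixed point is a word $x$ with $\mathcal P_k(x)=x$. *)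

(* Defs.v *)
From mathcomp Require Import all_boot.
Set Implicit Arguments. Unset Strict Implicit. Unset Printing Implicit Defensive.

Definition is_word (k : nat) (x : seq nat) : bool :=
  (x != [::]) && all (fun a => a < k) x.

(* [c]_k : base-k representation of c > 0, most significant digit first,
   with trunc_log k c + 1 = floor(log_k c) + 1 digits. *)
Definition digits (k c : nat) : seq nat :=
  let n := trunc_log k c in
  [seq (c %/ k ^ (n - i)) %% k | i <- iota 0 n.+1].

Definition letters (k : nat) (x : seq nat) : seq nat :=
  [seq b <- rev (iota 0 k) | b \in x].

Definition Pk (k : nat) (x : seq nat) : seq nat :=
  flatten [seq digits k (count_mem b x) ++ [:: b] | b <- letters k x].

(* Main.v *)
Require Import Defs.
From mathcomp Require Import all_boot.

Lemma sum_count {s x : seq nat} : uniq s -> {subset x <= s} ->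
  \sum_(b <- s) count_mem b x = size x.
Proof.
move=> us; elim: x => [|a x IH] sub /=; first by rewrite big1 // => b _.
rewrite big_split /= IH; last by move=> y yx; apply: sub; rewrite inE yx orbT.
rewrite -add1n; congr (_ + _).
rewrite -big_mkcond /= sum1_count.
have -> : count (fun b => a == b) s = count_mem a s by apply: eq_count => b; rewrite eq_sym.
by rewrite count_uniq_mem // sub // mem_head.
Qed.

Theorem theorem2 (k : nat) (x : seq nat) :
  2 <= k -> is_word k x -> Pk k x = x ->
  \sum_(b <- letters k x) k ^ trunc_log k (count_mem b x)
    <= \sum_(b <- letters k x) trunc_log k (count_mem b x) + 2 * size (letters k x).
Proof.
move=> k2 /andP[_ wx] fx.
have ul : uniq (letters k x) by rewrite filter_uniq // rev_uniq iota_uniq.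
have subl : {subset x <= letters k x}.
  move=> y yx; rewrite mem_filter yx /= mem_rev mem_iota /=.
  exact: (allP wx).
apply: (@leq_trans (\sum_(b <- letters k x) count_mem b x)).
  rewrite big_seq_cond [X in _ <= X]big_seq_cond; apply: leq_sum => b /andP[bl _].
  apply: trunc_logP => //; rewrite -has_count has_pred1; move: bl; by rewrite mem_filter; case/andP.

rewrite (_ : \sum_(b <- letters k x) count_mem b x = size x); last exact: sum_count.
rewrite -{1}fx /Pk size_flatten /shape -map_comp sumnE big_map.
have -> : 2 * size (letters k x) = \sum_(b <- letters k x) 2.
  by rewrite big_const_seq count_predT iter_addn_0 mulnC.
rewrite -big_split /=; apply: leq_sum => b _.
by rewrite size_cat size_map size_iota /= ltn_add2l.
Qed.
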